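(* Let $C$ be a binary linear $[n,k]$ code whose hull $\mathrm{Hull}(C)=C\cap C^{\perp}$ has dimension $\ell$, where $0\le\ell\le k$. Let $G$ be a $k\times n$ generator matrix of $C$ with rows $\mathbf r_1,\dots,\mathbf r_k$ and $H$ an $(n-k)\times n$ parity check matrix of $C$ with rows $\mathbf s_1,\dots,\mathbf s_{n-k}$. Suppose $\mathbf x=(x_1,\dots,x_n)\in\mathbb F_2^n$ satisfies $\mathbf x\cdot\mathbf x=0$. Put $y_i=\mathbf x\cdot\mathbf r_i$ ($1\le i\le k$) and $z_j=\mathbf x\cdot\mathbf s_j$ ($1\le j\le n-k$). Then: (a) the matrix \[ G_2=\begin{bmatrix} 1 & 1 & x_1\ \cdots\ x_n\\ y_1 & 0 & \mathbf r_1\\ \vdots & \vdots & \vdots\\ y_k & 0 & \mathbf r_k\end{bmatrix} \] generates a binary linear $[n+2,k+1]$ code $C_2$ whose hull has dimension $\ell$, $\ell+1$ or $\ell+2$. More precisely: if $y_i=0$ for all $1\le i\le k$, then the hull of $C_2$ has dimension $\ell+1$; if $y_i\neq 0$ for some $1\le i\le k$, then the hull of $C_2$ has dimension $\ell$, $\ell+1$, or $\ell+2$. (b) the matrix \[ H_2=\begin{bmatrix} 1 & 1 & x_1\ \cdots\ x_n\\ 0 & z_1 & \mathbf s_1\\ \vdots & \vdots & \vdots\\ 0 & z_{n-k} & \mathbf s_{n-k}\end{bmatrix} \] is a parity check matrix for $C_2$.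
   Context: All codes are binary linear codes; the dual is taken with respect to the standard dot product on $\mathbb F_2^n$, and $\mathrm{Hull}(C)=C\cap C^{\perp}$. A parity check matrix of $C$ is a generator matrix of $C^{\perp}$. The case where all $y_i=0$ is called Construction II; the case where some $y_i\ne 0$ is called Construction III. *)

(* Defs.v *)
From HB Require Import structures.
From mathcomp Require Import all_boot all_order all_algebra.
Set Implicit Arguments. Unset Strict Implicit. Unset Printing Implicit Defensive.
Import GRing.Theory.
Local Open Scope ring_scope.

(* Binary linear codes of length n are represented by matrices over 'F_2
   whose row space is the code.  Standard dot product on F_2^n. *)
Definition dot (n : nat) (u v : 'rV['F_2]_n) : 'F_2 := (u *m v^T) 0 0.

Definition dualmx (m n : nat) (A : 'M['F_2]_(m, n)) : 'M['F_2]_n := kermx A^T.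

Definition hullmx (m n : nat) (A : 'M['F_2]_(m, n)) : 'M['F_2]_n :=
  (A :&: dualmx A)%MS.

Definition ones2 : 'rV['F_2]_2 := \row_(j < 2) 1.

Definition G2mx (n k : nat) (G : 'M['F_2]_(k, n)) (x : 'rV['F_2]_n)
  : 'M['F_2]_(1 + k, 2 + n) :=
  col_mx (row_mx ones2 x)
         (row_mx (row_mx (\col_(i < k) dot x (row i G)) (0 : 'cV_k)) G).

Definition H2mx (n r : nat) (H : 'M['F_2]_(r, n)) (x : 'rV['F_2]_n)
  : 'M['F_2]_(1 + r, 2 + n) :=
  col_mx (row_mx ones2 x)
         (row_mx (row_mx (0 : 'cV_r) (\col_(j < r) dot x (row j H))) H).

(* Main.v *)
Require Import Defs.
From mathcomp Require Import all_boot all_order all_algebra.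
From mathcomp Require Import zify.
Import GRing.Theory.
Local Open Scope ring_scope.

Lemma F2xx (a : 'F_2) : a + a = 0.
Proof. by apply: addrr_pchar2; apply: pchar_Fp. Qed.

Lemma F2mxx m n (A : 'M['F_2]_(m, n)) : A + A = 0.
Proof. by apply/matrixP => i j; rewrite !mxE F2xx. Qed.

Lemma hull_rank m n p (A : 'M['F_2]_(m, n)) (B : 'M['F_2]_(n, p)) :
  row_free A -> \rank (A :&: kermx B)%MS = \rank (kermx (A *m B)).
Proof.
move=> fA.
have E : (kermx (A *m B) *m A :=: A :&: kermx B)%MS.
  apply/eqmxP/andP; split.
    rewrite sub_capmx submxMl /=; apply/sub_kermxP.
    by rewrite -mulmxA; apply/sub_kermxP.
  have H := capmxSl A (kermx B).
  rewrite -[X in (X <= _)%MS](mulmxKpV H); apply: submxMr.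
  apply/sub_kermxP; rewrite mulmxA (mulmxKpV H); apply/sub_kermxP.
  exact: capmxSr.
by rewrite -E mxrankMfree.
Qed.

Lemma free_of_inj m n (A : 'M['F_2]_(m, n)) :
  (forall v : 'rV_m, v *m A = 0 -> v = 0) -> row_free A.
Proof.
move=> H; rewrite -kermx_eq0; apply/eqP/row_matrixP => i.
by rewrite row0; apply: H; rewrite -row_mul mulmx_ker row0.
Qed.

Lemma colY n k (G : 'M['F_2]_(k, n)) (x : 'rV['F_2]_n) :
  \col_(i < k) dot x (row i G) = G *m x^T.
Proof.
apply/matrixP => i j; rewrite ord1 !mxE /dot !mxE.
by apply: eq_bigr => l _; rewrite !mxE mulrC.
Qed.

Lemma ones2E : ones2 = row_mx (1 : 'M_1) 1.
Proof.
apply/matrixP => i j; rewrite !mxE.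
by case: splitP => j' _; rewrite ?mxE ?ord1 ?eqxx.
Qed.
Lemma free_block m n (a : 'rV['F_2]_2) (u : 'rV['F_2]_n) (P : 'M['F_2]_(m,2))
   (Q : 'M['F_2]_(m,n)) (j : 'I_2) :
  a 0 j = 1 -> (forall i, P i j = 0) -> row_free Q ->
  row_free (col_mx (row_mx a u) (row_mx P Q) : 'M_(1+m, 2+n)).
Proof.
move=> Ha HP fQ; apply: free_of_inj => v Hv.
rewrite -(hsubmxK v) in Hv *.
move: (lsubmx v) (rsubmx v) Hv => b w Hv.
rewrite mul_row_col !mul_mx_row add_row_mx -row_mx0 in Hv.
case/eq_row_mx: Hv => H1 H2.
have b0 : b = 0.
  apply/matrixP => i i'; rewrite !ord1 [RHS]mxE.
  have := congr1 (fun M : 'M_(1,2) => M 0 j) H1; rewrite mxE [X in X + _ = _]mxE big_ord1.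
  rewrite mxE big1 => [|i2 _]; last by rewrite HP mulr0.
  by rewrite Ha mulr1 addr0 mxE.
rewrite b0 mul0mx add0r -(mul0mx _ Q) in H2.
by rewrite b0 (row_free_inj fQ H2) row_mx0.
Qed.

Lemma rank_blk0 m n (M : 'M['F_2]_(m, n)) p q :
  \rank (block_mx (0 : 'M_(p, q)) 0 0 M) = \rank M.
Proof.
rewrite /block_mx row_mx0 -addsmxE.
rewrite (adds0mx p (row_mx 0 M)).
rewrite -mxrank_tr tr_row_mx -addsmxE trmx0.
rewrite (adds0mx q (M^T)).
by rewrite mxrank_tr.
Qed.

Theorem theorem2 (n k l : nat) (G : 'M['F_2]_(k, n)) (H : 'M['F_2]_(n - k, n))
  (x : 'rV['F_2]_n) :
  row_free G ->                         (* G is a generator matrix of an [n,k] code C *)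
  row_free H -> (H == dualmx G)%MS ->   (* H is a parity check matrix of C *)
  \rank (hullmx G) = l ->               (* dim Hull(C) = l *)
  dot x x = 0 ->
  (* (a) *)
  (\rank (G2mx G x) = k + 1)%N /\
  ((forall i : 'I_k, dot x (row i G) = 0) -> \rank (hullmx (G2mx G x)) = (l + 1)%N) /\
  ((exists i : 'I_k, dot x (row i G) != 0) ->
     [\/ \rank (hullmx (G2mx G x)) = l,
         \rank (hullmx (G2mx G x)) = (l + 1)%N |
         \rank (hullmx (G2mx G x)) = (l + 2)%N]) /\
  (* (b) *)
  (row_free (H2mx H x) /\ (H2mx H x == dualmx (G2mx G x))%MS).
Proof.
move=> fG fH HG hl hx.
have xx : x *m x^T = 0.
  by apply/matrixP => i j; rewrite !ord1 [RHS]mxE; exact: hx.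
have fG2 : row_free (G2mx G x).
  apply: (@free_block _ _ _ _ _ _ (1 : 'I_2)) => //; first by rewrite mxE.
  move=> i; rewrite mxE; case: splitP => j' Hj; last by rewrite mxE.
  by move: Hj; rewrite ord1.
have rG2 : \rank (G2mx G x) = (k + 1)%N.
  by move/eqP: fG2 => ->; rewrite addnC.
set Y := G *m x^T.
have HY : \col_(i < k) dot x (row i G) = Y by rewrite colY.
have xG : x *m G^T = Y^T by rewrite /Y trmx_mul trmxK.
have GG : G2mx G x *m (G2mx G x)^T = block_mx 0 0 0 (Y *m Y^T + G *m G^T).
  rewrite /G2mx HY ones2E tr_col_mx !tr_row_mx mul_col_row !mul_row_col.
  rewrite (tr_row_mx (1 : 'M['F_2]_1) 1).
  rewrite (tr_row_mx Y (0 : 'cV_k)).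
  rewrite (mul_row_col (1 : 'M['F_2]_1) 1) (mul_row_col (1 : 'M['F_2]_1) 1).
  rewrite (mul_row_col Y (0 : 'cV_k)) (mul_row_col Y (0 : 'cV_k)).
  rewrite !trmx1 !trmx0 !mulmx1 !mul1mx !mulmx0 xx xG -/Y ?addr0 ?F2mxx.
  by [].
have h2 : \rank (hullmx (G2mx G x)) = ((1+k) - \rank (Y *m Y^T + G *m G^T)%R)%N.
  rewrite /hullmx /dualmx hull_rank // GG mxrank_ker; congr (_ - _)%N; exact: rank_blk0.
have h1 : l = (k - \rank (G *m G^T))%N.
  by rewrite -hl /hullmx /dualmx hull_rank // mxrank_ker.
have r0k : (\rank (G *m G^T) <= k)%N := rank_leq_row _.
have rY : (\rank (Y *m Y^T) <= 1)%N := leq_trans (mxrankM_maxl _ _) (rank_leq_col _).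
have b1 : (\rank (Y *m Y^T + G *m G^T)%R <= \rank (Y *m Y^T) + \rank (G *m G^T))%N
  := mxrank_add _ _.
have b2 : (\rank (G *m G^T) <= \rank (Y *m Y^T + G *m G^T)%R + \rank (Y *m Y^T))%N.
  have e : G *m G^T = (Y *m Y^T + G *m G^T) + Y *m Y^T.
    by rewrite addrC addrA F2mxx add0r.
  by rewrite {1}e; apply: mxrank_add.
split; first exact: rG2.
split.
  move=> Hall.
  have Y0 : Y = 0 by rewrite -HY; apply/matrixP => i j; rewrite !mxE Hall.
  by rewrite h2 Y0 mul0mx add0r h1; lia.
split.
  move=> _; rewrite h2 h1.
  move: b1 b2 rY r0k.
  set r2 := \rank (Y *m Y^T + G *m G^T)%R.
  set r0 := \rank (G *m G^T).
  set ry := \rank (Y *m Y^T).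
  move=> b1 b2 rY r0k.
  case: (ltngtP r2 r0) => C; [apply: Or33 | apply: Or31 | apply: Or32]; lia.
have HG0 : H *m G^T = 0 by move/andP: HG => [/sub_kermxP].
have fH2 : row_free (H2mx H x).
  apply: (@free_block _ _ _ _ _ _ (0 : 'I_2)) => //; first by rewrite mxE.
  move=> i; rewrite mxE; case: splitP => j' Hj; first by rewrite mxE.
  by move: Hj; rewrite ord1.
split; first exact: fH2.
set Z := H *m x^T.
have HZ : \col_(j < n - k) dot x (row j H) = Z by rewrite colY.
have HGT : H2mx H x *m (G2mx G x)^T = 0.
  rewrite /H2mx /G2mx HY HZ ones2E tr_col_mx !tr_row_mx mul_col_row !mul_row_col.
  rewrite (tr_row_mx (1 : 'M['F_2]_1) 1).
  rewrite (tr_row_mx Y (0 : 'cV_k)).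
  rewrite (mul_row_col (1 : 'M['F_2]_1) 1) (mul_row_col (1 : 'M['F_2]_1) 1).
  rewrite (mul_row_col (0 : 'cV_(n - k)) Z) (mul_row_col (0 : 'cV_(n - k)) Z).
  rewrite !trmx1 !trmx0 !mulmx1 !mul1mx !mulmx0 ?mul0mx xx xG HG0 -/Z.
  by rewrite ?addr0 ?add0r ?F2mxx block_mx0.
have S : (H2mx H x <= dualmx (G2mx G x))%MS by apply/sub_kermxP.
apply/andP; split; first exact: S.
rewrite -(mxrank_leqif_sup S).2 /dualmx mxrank_ker mxrank_tr rG2.
move/eqP: fH2 => ->.
have kn : (k <= n)%N by rewrite -(eqP fG) rank_leq_col.
apply/eqP; lia.
Qed.
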